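(* Let $T\ge1$, $\tau>0$ with $\tau L<\frac12$, and let $(x_t)_{t=0}^{T+1}$ be generated from a deterministic $x_0$ by proximal SGD $x_{t+1}=\operatorname{prox}_{\tau g}(x_t-\tau\nabla f_{i_t}(x_t))$. Set $\epsilon'=\frac{1-2\tau L}{1+2\tau L}$, $a=2\tau L(1+\epsilon')$ and $v=(1+1/\epsilon')\sigma_*^2\tau$. Suppose that for every $t\in\{0,\dots,T\}$ and every random vector $z_t$ measurable with respect to $\sigma(x_0,\dots,x_t)$, \[ \mathbb{E}_t[h(x_{t+1})-h(z_t)-a\,h(x_t)+a\,h^*]\le\frac{1}{2\tau}\mathbb{E}_t[\|x_t-z_t\|^2-\|x_{t+1}-z_t\|^2]+v. \] Define $\alpha_{-1}=\alpha_0=1$ and $\alpha_t=\frac{T-t+2}{a+T-t+1}\alpha_{t-1}$ for $t=1,\dots,T$. Then for every minimizer $x^*$ of $h$, \[ \mathbb{E}[h(x_{T+1})-h^*]\le\frac{1}{2\tau\alpha_T}\mathbb{E}\|x_0-x^*\|^2+\frac{v}{\alpha_T}\alpha_0+\frac{v}{\alpha_T}\sum_{t=1}^T\alpha_t+\frac{1}{\alpha_T}\mathbb{E}[h(x_0)-h^*]. \]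
   Context: Let $D$ be a probability distribution on an index set, and for each index $i$ let $f_i:\mathbb{R}^n\to\mathbb{R}$ be convex and differentiable with $L$-Lipschitz gradient ($L>0$). Let $f(x)=\mathbb{E}_{i\sim D}[f_i(x)]$ with $\mathbb{E}_{i\sim D}[\nabla f_i(x)]=\nabla f(x)$. Let $g:\mathbb{R}^n\to\mathbb{R}\cup\{+\infty\}$ be proper, convex, lower semicontinuous, $h=f+g$, assume $\arg\min h\neq\emptyset$, $h^*=\min h$, and $\sigma_*^2:=\mathbb{E}_{i\sim D}\|\nabla f_i(\bar x)\|^2<\infty$ for some $\bar x\in\arg\min h$. $\operatorname{prox}_{\tau g}(y)=\arg\min_z\{\tau g(z)+\tfrac12\|y-z\|^2\}$. The indices $i_t$ are i.i.d. from $D$ with $i_t$ independent of $x_0,\dots,x_t$; $\mathbb{E}_t$ is conditional expectation given $\sigma(x_0,\dots,x_t)$. *)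

(* Defs.v *)
From HB Require Import structures.
From mathcomp Require Import all_boot all_order all_algebra.
From mathcomp Require Import all_classical all_reals all_analysis.

Set Implicit Arguments.
Unset Strict Implicit.
Unset Printing Implicit Defensive.

Import Order.TTheory GRing.Theory Num.Theory.
Import numFieldNormedType.Exports.

Local Open Scope classical_set_scope.
Local Open Scope ring_scope.

Section Defs.
Context {R : realType} {n : nat}.

Definition dotv (u w : 'rV[R]_n) : R := \sum_(j < n) u ord0 j * w ord0 j.
Definition sqnorm (u : 'rV[R]_n) : R := \sum_(j < n) u ord0 j ^+ 2.
Definition enorm (u : 'rV[R]_n) : R := Num.sqrt (sqnorm u).

Definition convex_rfun (F : 'rV[R]_n -> R) : Prop :=
  forall u w (l : R), 0 <= l -> l <= 1 ->
    F (l *: u + (1 - l) *: w) <= l * F u + (1 - l) * F w.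

Definition convex_efun (G : 'rV[R]_n -> \bar R) : Prop :=
  forall (u w : 'rV[R]_n) (l : R), 0 <= l -> l <= 1 ->
    (G (l *: u + (1 - l) *: w)%R <= l%:E * G u + (1 - l)%:E * G w)%E.

Definition proper_efun (G : 'rV[R]_n -> \bar R) : Prop :=
  (forall u, G u != -oo%E) /\ (exists u, (G u < +oo)%E).

Definition has_gradient (F : 'rV[R]_n -> R) (gr : 'rV[R]_n -> 'rV[R]_n) :
  Prop :=
  forall u, differentiable F u /\ forall d, 'd F u d = dotv (gr u) d.

Definition is_prox (tau : R) (G : 'rV[R]_n -> \bar R) (y p : 'rV[R]_n) : Prop :=
  forall z, (tau%:E * G p + (sqnorm (y - p) / 2)%:E
             <= tau%:E * G z + (sqnorm (y - z) / 2)%:E)%E.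

Definition sigma_past {d} {Omega : measurableType d}
  (x : nat -> Omega -> 'rV[R]_n) (t : nat) : set (set Omega) :=
  <<s \bigcup_(s in [set s | (s <= t)%N])
        \bigcup_(j in [set: 'I_n])
          preimage_set_system setT (fun w => x s w ord0 j) measurable >>.

Definition measurable_wrt {Omega : Type} (F : set (set Omega))
  (z : Omega -> 'rV[R]_n) : Prop :=
  forall (j : 'I_n) (B : set R), measurable B ->
    F ((fun w => z w ord0 j) @^-1` B).

End Defs.

Definition mutually_independent {R : realType} {d dI} {Omega : measurableType d}
  {I : measurableType dI} (P : probability Omega R) (idx : nat -> Omega -> I) :
  Prop :=
  forall (S : seq nat) (B : nat -> set I), uniq S ->
    (forall s, measurable (B s)) ->
    P (\bigcap_(s in [set s | s \in S]) (idx s @^-1` B s)) =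
    \big[*%E/1%E]_(s <- S) P (idx s @^-1` B s).

Fixpoint alpha {R : realType} (a : R) (T : nat) (t : nat) : R :=
  match t with
  | 0 => 1
  | s.+1 => (T%:R - s.+1%:R + 2) / (a + T%:R - s.+1%:R + 1) * alpha a T s
  end.

(* Main.v *)
Require Import Defs.
From HB Require Import structures.
From mathcomp Require Import all_boot all_order all_algebra.
From mathcomp Require Import all_classical all_reals all_analysis.
From mathcomp Require Import measurable_realfun.
From mathcomp Require Import ring lra.
Set Implicit Arguments.
Unset Strict Implicit.
Unset Printing Implicit Defensive.
Import Order.TTheory GRing.Theory Num.Theory.
Import numFieldNormedType.Exports.
Local Open Scope classical_set_scope.
Local Open Scope ring_scope.
Section GM.
Context (R : realType) (n : nat) (d : measure_display) (Omega : measurableType d).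

Definition box (c : 'I_n -> R) (r : R) : set 'rV[R]_n :=
  [set y | forall j, `|y ord0 j - c j| < r].

Lemma box_cover (U : set 'rV[R]_n) (y : 'rV[R]_n) : nbhs y U ->
  exists qr : {ffun 'I_n -> rat} * rat,
    box (fun j => ratr (qr.1 j)) (ratr qr.2) y /\
    box (fun j => ratr (qr.1 j)) (ratr qr.2) `<=` U.
Proof.
move=> /nbhs_ballP [e e0 be].
have [r /andP [r0 re]] : exists r : rat, (0 < ratr r :> R) && (ratr r < e / 2).
  have [q] := @rat_in_itvoo R 0 (e / 2) ltac:(by rewrite divr_gt0).
  by rewrite in_itv /=; exists q.
have [q qP] : exists q : 'I_n -> rat, forall j,
    `|y ord0 j - ratr (q j)| < (ratr r : R).
  apply: (@fin_all_exists _ (fun _ => rat) (fun j (qq : rat) => `|y ord0 j - ratr qq| < (ratr r : R))) => j.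
  have [q] := @rat_in_itvoo R (y ord0 j - ratr r) (y ord0 j + ratr r)
    ltac:(by rewrite ltrBlDr -addrA ltrDl addr_gt0).
  rewrite in_itv /= => /andP [h1 h2]; exists q.
  rewrite ltr_norml; apply/andP; split.
    by rewrite ltrNl opprB ltrBlDl.
  by rewrite ltrBlDr addrC -ltrBlDr.
exists ([ffun j => q j], r); split.
  by move=> j /=; rewrite ffunE.
move=> z zb; apply: be; split => // i j.
rewrite (ord1 i) /ball /=.
have := zb j; have := qP j; rewrite /= ffunE => h1 h2.
rewrite -(subrKA (ratr (q j))).
apply: (le_lt_trans (ler_normD _ _)).
rewrite (splitr e) ltrD //; first by rewrite (lt_trans h1).
by rewrite distrC (lt_trans h2).
Qed.

Lemma box_measurable (X : Omega -> 'rV[R]_n) c r :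
  (forall j, measurable_fun setT (fun w => X w ord0 j)) ->
  measurable (X @^-1` box c r).
Proof.
move=> mX.
have -> : X @^-1` box c r =
   \bigcap_(j in [set: 'I_n]) ((fun w => X w ord0 j) @^-1` `](c j - r), (c j + r)[%classic).
  apply/seteqP; split => w /=.
    move=> h j _ /=; rewrite in_itv /=; have := h j.
    rewrite ltr_norml => /andP [h1 h2]; apply/andP; split; lra.
  move=> h j; have := h j I; rewrite /= in_itv /= => /andP [h1 h2].
  rewrite ltr_norml; apply/andP; split; lra.
apply: fin_bigcap_measurable; first exact: finite_finset.
move=> j _; rewrite -[X in measurable X]setTI; exact: mX.
Qed.

Lemma lsc_comp_measurable (X : Omega -> 'rV[R]_n) (G : 'rV[R]_n -> \bar R) :
  (forall j, measurable_fun setT (fun w => X w ord0 j)) ->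
  lower_semicontinuous G -> measurable_fun setT (G \o X).
Proof.
move=> mX lG.
apply: (measurability _ (ErealGenOInfty.measurableE R)).
move=> /= _ [_ [a ->]] <-.
pose F (k : nat) : set Omega :=
  match @unpickle ({ffun 'I_n -> rat} * rat)%type k with
  | Some qr => if pselect (box (fun j => ratr (qr.1 j)) (ratr qr.2) `<=`
                          [set y | (a%:E < G y)%E])
               then X @^-1` box (fun j => ratr (qr.1 j)) (ratr qr.2) else set0
  | None => set0 end.
have -> : setT `&` (G \o X) @^-1` `]a%:E, +oo[%classic = \bigcup_k F k.
  apply/seteqP; split => w /=.
    rewrite in_itv /= andbT => -[_ aG].
    have [V nV VP] := lG _ _ aG.
    have [qr [qrb qrU]] := box_cover nV.
    exists (pickle qr) => //; rewrite /F pickleK.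
    case: pselect => [//| nsub]; exfalso; apply: nsub => y /qrU; exact: VP.
  move=> [k _]; rewrite /F; case: unpickle => [qr|//].
  case: pselect => [sub Xw|//]; split => //.
  by rewrite /= in_itv /= andbT; exact: (sub _ Xw).
apply: bigcupT_measurable => k; rewrite /F; case: unpickle => [qr|//].
case: pselect => [h|h]; [exact: box_measurable|exact: measurable0].
Qed.
End GM.
Section L0.
Context (R : realType) d (Omega : measurableType d) (mu : {measure set Omega -> \bar R}).

Lemma maxsub (p q : R) : (Num.max (p - q) 0 + q = p + Num.max (q - p) 0)%R.
Proof.
case: (leP p q) => h.
  by rewrite (@max_r _ _ (p - q)) ?(@max_l _ _ (q - p)); lra.
by rewrite (@max_l _ _ (p - q)) ?(@max_r _ _ (q - p)); lra.
Qed.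
Local Open Scope ereal_scope.

Lemma L0g (F G : Omega -> R) : measurable_fun setT F -> measurable_fun setT G ->
  (forall w, (0 <= F w)%R) -> (forall w, (0 <= G w)%R) ->
  let Pp := fun w => Num.max (F w - G w)%R 0%R in
  let Nn := fun w => Num.max (G w - F w)%R 0%R in
  [/\ \int[mu]_w ((F w - G w)%R)%:E = \int[mu]_w (Pp w)%:E - \int[mu]_w (Nn w)%:E,
      \int[mu]_w (Pp w)%:E + \int[mu]_w (G w)%:E = \int[mu]_w (F w)%:E + \int[mu]_w (Nn w)%:E,
      \int[mu]_w (Pp w)%:E <= \int[mu]_w (F w)%:E &
      \int[mu]_w (Nn w)%:E <= \int[mu]_w (G w)%:E].
Proof.
move=> mF mG F0 G0 Pp Nn.
have mPp : measurable_fun setT Pp.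
  by apply: measurable_maxr => //; apply: measurable_funB.
have mNn : measurable_fun setT Nn.
  by apply: measurable_maxr => //; apply: measurable_funB.
have Pp0 w : (0 <= Pp w)%R by rewrite /Pp le_max lexx orbT.
have Nn0 w : (0 <= Nn w)%R by rewrite /Nn le_max lexx orbT.
split.
- rewrite integralE; congr (_ - _); apply: eq_integral => w _.
    by rewrite funeposE /Pp EFin_max.
  by rewrite funenegE /Nn EFin_max -EFinN opprB.
- rewrite -!ge0_integralD //; try (by move=> *; rewrite lee_fin);
    try (by apply/measurable_EFinP).
  apply: eq_integral => w _; rewrite -!EFinD; congr (_%:E).
  exact: maxsub.
- apply: ge0_le_integral => //; try (by move=> *; rewrite lee_fin);
    try (by apply/measurable_EFinP).
  move=> w _; rewrite lee_fin /Pp ge_max F0 andbT; have := G0 w; lra.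
- apply: ge0_le_integral => //; try (by move=> *; rewrite lee_fin);
    try (by apply/measurable_EFinP).
  move=> w _; rewrite lee_fin /Nn ge_max G0 andbT; have := F0 w; lra.
Qed.
End L0.
Section E.
Context (R : realType).
Local Open Scope ereal_scope.
Lemma fin_of (x : \bar R) : 0 <= x -> x < +oo -> x = (fine x)%:E.
Proof. by case: x. Qed.

Lemma ereal_core (iF iG iP iN jK jM jP jN : \bar R) :
  0 <= iF -> 0 <= iP -> 0 <= iN -> 0 <= jM -> 0 <= jP -> 0 <= jN ->
  iP + iG = iF + iN -> iN <= iG -> jP + jM = jK + jN -> jP <= jK ->
  iG < +oo -> jK < +oo -> 0 <= iG ->
  iP - iN <= jP - jN -> iF < +oo /\ jM < +oo.
Proof.
move=> F0 P0 N0 M0 jP0 jN0 e1 e2 e3 e4 G1 K1 G0 ineq.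
have iN1 : iN < +oo by apply: le_lt_trans G1.
have jP1 : jP < +oo by apply: le_lt_trans K1.
rewrite (fin_of G0 G1) (fin_of N0 iN1) in e1 ineq.
rewrite (fin_of (le_trans jP0 e4) K1) (fin_of jP0 jP1) in e3 ineq.
move: (fine iG) (fine iN) (fine jK) (fine jP) e1 e3 ineq => g nn k p.
move: F0; case: iF => [f||] //= _; last first.
  move: P0; case: iP => [ip||] //= _ e1 e3; move: jN0 e3; case: jN => [jn||] //=.
move: P0; case: iP => [ip| |] //= _ _ e3 ineq; split => //.
all: move: jN0 e3 ineq; case: jN => [jn| |] //= _.
all: move: M0; case: jM => [m| |] //=.
all: by rewrite ltry.
Qed.
End E.
Section L1.
Context (R : realType) d (Omega : measurableType d) (mu : {measure set Omega -> \bar R}).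
Local Open Scope ereal_scope.

Lemma integ_ge0 (F : Omega -> R) : measurable_fun setT F -> (forall w, (0 <= F w)%R) ->
  \int[mu]_w (F w)%:E < +oo -> mu.-integrable setT (EFin \o F).
Proof.
move=> mF F0 fin; apply/integrableP; split; first exact/measurable_EFinP.
rewrite (_ : (fun x => `|(EFin \o F) x|) = (fun x => (F x)%:E)) //.
by apply: funext => w /=; rewrite ger0_norm.
Qed.

Lemma integ_fin (F : Omega -> R) : (forall w, (0 <= F w)%R) ->
  mu.-integrable setT (EFin \o F) -> \int[mu]_w (F w)%:E < +oo.
Proof.
move=> F0 /integrableP [_].
rewrite (_ : (fun x => `|(EFin \o F) x|) = (fun x => (F x)%:E)) //.
by apply: funext => w /=; rewrite ger0_norm.
Qed.

Lemma intB (F G : Omega -> R) : mu.-integrable setT (EFin \o F) ->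
  mu.-integrable setT (EFin \o G) ->
  \int[mu]_w ((F w - G w)%R)%:E = \int[mu]_w (F w)%:E - \int[mu]_w (G w)%:E.
Proof.
move=> iF iG; rewrite -integralB_EFin //; apply: eq_integral => w _.
Qed.

Lemma L1 (F G K M : Omega -> R) :
  measurable_fun setT F -> measurable_fun setT G ->
  measurable_fun setT K -> measurable_fun setT M ->
  (forall w, (0 <= F w)%R) -> (forall w, (0 <= G w)%R) ->
  (forall w, (0 <= K w)%R) -> (forall w, (0 <= M w)%R) ->
  mu.-integrable setT (EFin \o G) -> mu.-integrable setT (EFin \o K) ->
  \int[mu]_w ((F w - G w)%R)%:E <= \int[mu]_w ((K w - M w)%R)%:E ->
  [/\ mu.-integrable setT (EFin \o F), mu.-integrable setT (EFin \o M) &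
   \int[mu]_w (F w)%:E - \int[mu]_w (G w)%:E <=
   \int[mu]_w (K w)%:E - \int[mu]_w (M w)%:E].
Proof.
move=> mF mG mK mM F0 G0 K0 M0 iG iK ineq.
have [a1 a2 a3 a4] := L0g mu mF mG F0 G0.
have [k1 k2 k3 k4] := L0g mu mK mM K0 M0.
rewrite a1 k1 in ineq.
have ge0 (H : Omega -> R) : (forall w, (0 <= H w)%R) -> 0 <= \int[mu]_w (H w)%:E.
  by move=> H0; apply: integral_ge0 => w _; rewrite lee_fin.
have mx0 (x : R) : (0 <= Num.max x 0)%R by rewrite le_max lexx orbT.
have p1 : 0 <= \int[mu]_w (Num.max (F w - G w)%R 0%R)%:E by exact: ge0.
have p2 : 0 <= \int[mu]_w (Num.max (G w - F w)%R 0%R)%:E by exact: ge0.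
have p3 : 0 <= \int[mu]_w (Num.max (K w - M w)%R 0%R)%:E by exact: ge0.
have p4 : 0 <= \int[mu]_w (Num.max (M w - K w)%R 0%R)%:E by exact: ge0.
have [fF fM] := ereal_core (ge0 _ F0) p1 p2 (ge0 _ M0) p3 p4
   a2 a4 k2 k3 (integ_fin G0 iG) (integ_fin K0 iK) (ge0 _ G0) ineq.
have iF := integ_ge0 mF F0 fF; have iM := integ_ge0 mM M0 fM.
split => //.
by rewrite -intB // -intB // a1 k1.
Qed.
End L1.
Section L2.
Context (R : realType) d (Omega : measurableType d) (P : probability Omega R).
Local Notation RI f := (Rintegral P setT f).

Lemma intD_R (f g : Omega -> R) : P.-integrable setT (EFin \o f) ->
  P.-integrable setT (EFin \o g) -> P.-integrable setT (EFin \o (fun w => f w + g w)).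
Proof.
move=> i1 i2; apply: eq_integrable (integrableD _ i1 i2) => //= w _.
Qed.

Lemma intZ_R (f : Omega -> R) k : P.-integrable setT (EFin \o f) ->
  P.-integrable setT (EFin \o (fun w => k * f w)).
Proof.
move=> i1; apply: eq_integrable (integrableZl _ k i1) => //= w _.
Qed.

Lemma intC_R k : P.-integrable setT (EFin \o (fun _ : Omega => k)).
Proof. exact: finite_measure_integrable_cst. Qed.

Lemma RIC k : RI (fun _ => k) = k.
Proof. rewrite Rintegral_cst //. have -> : fine (P [set: Omega]) = 1 by rewrite probability_setT. by rewrite mulr1. Qed.

Lemma L2 (F G1 G2 K M : Omega -> R) (c e v : R) : 0 <= c -> 0 < e -> 0 <= v ->
  measurable_fun setT F -> measurable_fun setT G1 -> measurable_fun setT G2 ->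
  measurable_fun setT K -> measurable_fun setT M ->
  (forall w, 0 <= F w) -> (forall w, 0 <= G1 w) -> (forall w, 0 <= G2 w) ->
  (forall w, 0 <= K w) -> (forall w, 0 <= M w) ->
  P.-integrable setT (EFin \o G1) -> P.-integrable setT (EFin \o G2) ->
  P.-integrable setT (EFin \o K) ->
  (\int[P]_w ((F w - (G1 w + c * G2 w))%:E) <= \int[P]_w ((e * (K w - M w) + v)%:E))%E ->
  [/\ P.-integrable setT (EFin \o F), P.-integrable setT (EFin \o M) &
   RI F - (RI G1 + c * RI G2) <= e * (RI K - RI M) + v].
Proof.
move=> c0 e0 v0 mF mG1 mG2 mK mM F0 G10 G20 K0 M0 iG1 iG2 iK ineq.
have mG : measurable_fun setT (fun w => G1 w + c * G2 w).
  by apply: measurable_funD => //; apply: measurable_funM.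
have mK' : measurable_fun setT (fun w => e * K w + v).
  by apply: measurable_funD => //; apply: measurable_funM.
have mM' : measurable_fun setT (fun w => e * M w).
  by apply: measurable_funM.
have iG : P.-integrable setT (EFin \o (fun w => G1 w + c * G2 w)).
  by apply: intD_R => //; apply: intZ_R.
have iK' : P.-integrable setT (EFin \o (fun w => e * K w + v)).
  by apply: intD_R; [apply: intZ_R|apply: intC_R].
have [] := L1 mF mG mK' mM' F0 (fun w => addr_ge0 (G10 w) (mulr_ge0 c0 (G20 w)))
  (fun w => addr_ge0 (mulr_ge0 (ltW e0) (K0 w)) v0) (fun w => mulr_ge0 (ltW e0) (M0 w))
  iG iK'.
  by apply: le_trans ineq _; rewrite le_eqVlt; apply/orP; left; apply/eqP;
    apply: eq_integral => w _; congr (_%:E); ring.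
move=> iF iM' ineq2.
have iM : P.-integrable setT (EFin \o M).
  apply: eq_integrable (intZ_R e^-1 iM') => // w _ /=.
  by rewrite mulrA mulVf ?mul1r // gt_eqF.
split => //.
have fin (f : Omega -> R) : P.-integrable setT (EFin \o f) ->
    (\int[P]_w (f w)%:E = (RI f)%:E)%E.
  by move=> i; rewrite /Rintegral fineK //; apply: integrable_fin_num.
rewrite !fin // -!EFinB lee_fin in ineq2.
rewrite RintegralD // ?RintegralZl // ?RIC // in ineq2; last exact: intZ_R.
rewrite RintegralD // ?RintegralZl // ?RIC // in ineq2; try exact: intZ_R.
  lra.
exact: intC_R.
Qed.
End L2.
Section Pot.
Context (R : realType).

Lemma potential (T : nat) (a e v : R) (al d : nat -> R) (m : nat -> nat -> R) :
  0 <= a -> a <= 1 -> 0 < e -> 0 <= v ->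
  al 0%N = 1 ->
  (forall t, (t < T)%N ->
     al t.+1 * (a + T%:R - t%:R) = al t * (T%:R - t%:R + 1)) ->
  (forall t, (t < T)%N -> al t <= al t.+1) ->
  (forall u, 0 <= d u) -> (forall u s, 0 <= m u s) ->
  (forall u, (1 <= u)%N -> m u u = 0) ->
  (forall t, (t <= T)%N -> d t.+1 - a * d t <= e * (m t 0%N - m t.+1 0%N) + v) ->
  (forall t s, (1 <= s <= t)%N -> (t <= T)%N ->
     d t.+1 - (d s + a * d t) <= e * (m t s - m t.+1 s) + v) ->
  al T * d T.+1 <= e * m 0%N 0%N + v * \sum_(0 <= t < T.+1) al t + d 0%N.
Proof.
move=> a0 a1 e0 v0 al0 rec mono d0 m0 mdiag ineq0 ineqs.
pose nu s := al s - al s.-1.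
pose Phi t u := m u 0%N + \sum_(1 <= s < t.+1) nu s * m u s.
pose S t := \sum_(1 <= s < t.+1) nu s * d s.
have nu0 s : (1 <= s <= T)%N -> 0 <= nu s.
  case: s => // s /andP [_ sT]; rewrite /nu /= subr_ge0; exact: mono.
have sumnu t : \sum_(1 <= s < t.+1) nu s = al t - 1.
  elim: t => [|t IH]; first by rewrite big_geq // al0 subrr.
  by rewrite big_nat_recr //= IH /nu /=; ring.
have claim : forall t, (t <= T)%N ->
  al t * d t.+1 + e * Phi t t.+1 + (T%:R - t%:R) * S t <=
  a * d 0%N + e * m 0%N 0%N + v * \sum_(0 <= u < t.+1) al u.
  elim => [|t IH] Ht.
    rewrite /Phi /S big_nat1 !big_geq // al0.
    have := ineq0 0%N Ht; lra.
  have IH' := IH (ltnW Ht).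
  have AG : \sum_(1 <= s < t.+2) nu s * (d t.+2 - (d s + a * d t.+1)) <=
            \sum_(1 <= s < t.+2) nu s * (e * (m t.+1 s - m t.+2 s) + v).
    rewrite big_nat [X in _ <= X]big_nat; apply: ler_sum => s /andP [s1 s2].
    apply: ler_wpM2l; first by apply: nu0; rewrite s1 /=; exact: leq_trans Ht.
    by apply: ineqs => //; rewrite s1 -ltnS.
  have E1 : \sum_(1 <= s < t.+2) nu s * (d t.+2 - (d s + a * d t.+1)) =
            (al t.+1 - 1) * (d t.+2 - a * d t.+1) - S t.+1.
    by rewrite -sumnu /S mulr_suml -sumrB; apply: eq_bigr => s _; ring.
  have E2 : \sum_(1 <= s < t.+2) nu s * (e * (m t.+1 s - m t.+2 s) + v) =
            e * (\sum_(1 <= s < t.+2) nu s * m t.+1 s - \sum_(1 <= s < t.+2) nu s * m t.+2 s)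
            + (al t.+1 - 1) * v.
    by rewrite -sumnu mulr_suml -sumrB mulr_sumr -big_split; apply: eq_bigr => s _ /=; ring.
  rewrite E1 E2 in AG.
  have I0 := ineq0 t.+1 Ht.
  have St : S t.+1 = S t + nu t.+1 * d t.+1 by rewrite /S big_nat_recr.
  have Pt : Phi t.+1 t.+1 = Phi t t.+1.
    by rewrite /Phi big_nat_recr //= mdiag // mulr0 addr0.
  have key : (T%:R - t%:R) * (nu t.+1 * d t.+1) + a * al t.+1 * d t.+1 =
             al t * d t.+1.
    have r := rec t Ht; rewrite /nu /=.
    have -> : al t * d t.+1 = (al t * (T%:R - t%:R + 1) - al t * (T%:R - t%:R)) * d t.+1 by ring.
    rewrite -r; ring.
  have Pm : \sum_(1 <= s < t.+2) nu s * m t.+1 s = \sum_(1 <= s < t.+1) nu s * m t.+1 s.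
    by rewrite big_nat_recr //= mdiag // mulr0 addr0.
  rewrite Pm St in AG.
  rewrite big_nat_recr //= /Phi St.
  have -> : (T%:R - t.+1%:R) = (T%:R - t%:R - 1 :> R) by rewrite -natr1; ring.
  move: AG I0 IH' key.
  rewrite /Phi.
  set X1 := \sum_(1 <= s < t.+1) nu s * m t.+1 s.
  set X2 := \sum_(1 <= s < t.+2) nu s * m t.+2 s.
  set Y := \sum_(0 <= i < t.+1) al i.
  move=> AG I0 IH' key.
  lra.
have c1 : 0 <= Phi T T.+1.
  rewrite /Phi; apply: addr_ge0 => //; rewrite big_nat; apply: sumr_ge0.
  by move=> s /andP [s1 s2]; apply: mulr_ge0 => //; apply: nu0; rewrite s1.
have c2 : 0 <= S T.
  rewrite /S big_nat; apply: sumr_ge0.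
  by move=> s /andP [s1 s2]; apply: mulr_ge0 => //; apply: nu0; rewrite s1.
have := claim T (leqnn T); rewrite subrr mul0r addr0.
have : 0 <= d 0%N := d0 _.
nra.
Qed.
End Pot.
Section Al.
Context (R : realType).
Lemma alpha_facts (a : R) (T : nat) : 0 <= a -> a <= 1 ->
  [/\ alpha a T 0 = 1,
   (forall t, (t < T)%N ->
     alpha a T t.+1 * (a + T%:R - t%:R) = alpha a T t * (T%:R - t%:R + 1)),
   (forall t, (t < T)%N -> alpha a T t <= alpha a T t.+1) &
   (forall t, (t <= T)%N -> 0 < alpha a T t)].
Proof.
move=> a0 a1.
have Tt t : (t < T)%N -> 1 <= T%:R - t%:R :> R.
  by move=> tT; have := tT; rewrite -(ler_nat R) -natr1 => h; lra.
have den t : (t < T)%N -> 0 < a + T%:R - t%:R :> R.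
  by move=> /Tt h; lra.
have eqS t : (t < T)%N -> alpha a T t.+1 =
    (T%:R - t%:R + 1) / (a + T%:R - t%:R) * alpha a T t.
  move=> tT /=; congr (_ / _ * _); rewrite -natr1; ring.
have pos : forall t, (t <= T)%N -> 0 < alpha a T t.
  elim => [|t IH] tT; first by []. rewrite eqS //; apply: mulr_gt0; last by apply: IH; exact: ltnW.

  apply: divr_gt0; last exact: den.
  by have := Tt _ tT; lra.
split => //.
- move=> t tT; rewrite eqS //; field.
  exact: lt0r_neq0 (den _ tT).
- move=> t tT; rewrite eqS // ler_peMl //; first exact/ltW/pos/ltnW.
  rewrite ler_pdivlMr ?mul1r; first by lra.
  exact: den.
Qed.
End Al.
Section H.
Context (R : realType) (n : nat).

Lemma sqnorm_ge0 (u : 'rV[R]_n) : 0 <= sqnorm u.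
Proof. by apply: sumr_ge0 => j _; exact: sqr_ge0. Qed.

Lemma sqnorm_zero : sqnorm (0 : 'rV[R]_n) = 0.
Proof. by apply: big1 => j _; rewrite mxE expr0n. Qed.

Lemma sqnorm_tri (u w c : 'rV[R]_n) :
  sqnorm (u - w) <= 2 * sqnorm (u - c) + 2 * sqnorm (w - c).
Proof.
rewrite /sqnorm !mulr_sumr -big_split /=; apply: ler_sum => j _.
rewrite !mxE; set p := u ord0 j; set q := w ord0 j; set r := c ord0 j.
have := sqr_ge0 (p + q - 2 * r); rewrite !expr2 => h; nra.
Qed.

Context d (Omega : measurableType d).
Lemma msq (X Z : Omega -> 'rV[R]_n) :
  (forall j, measurable_fun setT (fun w => X w ord0 j)) ->
  (forall j, measurable_fun setT (fun w => Z w ord0 j)) ->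
  measurable_fun setT (fun w => sqnorm (X w - Z w)).
Proof.
move=> mX mZ; rewrite /sqnorm.
apply: measurable_sum => j.
rewrite (_ : (fun w => _) = (fun w => (X w ord0 j - Z w ord0 j) ^+ 2)); last first.
  by apply: funext => w; rewrite !mxE.
apply: measurable_funX; exact: measurable_funB.
Qed.
End H.

Section P.
Context (R : realType) (n : nat).
Local Open Scope ereal_scope.
Lemma prox_fin (tau : R) (g : 'rV[R]_n -> \bar R) (u0 y p : 'rV[R]_n) :
  (0 < tau)%R -> (forall u, g u != -oo) -> g u0 < +oo ->
  is_prox tau g y p -> g p \is a fin_num.
Proof.
move=> t0 gN gu0 pr; have := pr u0.
move: (gN p) (gN u0) gu0; case: (g p) => [r| |] //; case: (g u0) => [r'| |] //.
by rewrite /= mulry gtr0_sg // mul1e.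
Qed.

Lemma cont_lsc (f : 'rV[R]_n -> R) : continuous f ->
  lower_semicontinuous (fun u => (f u)%:E).
Proof.
move=> cf x a; rewrite lte_fin => afx.
exists (f @^-1` [set r | (a < r)%R]).
  by apply: cf; exact: lt_nbhsr.
by move=> y /=; rewrite lte_fin.
Qed.
End P.

Local Open Scope classical_set_scope.
Local Open Scope ring_scope.

Theorem lemmaA6 (R : realType) (n : nat)
  (dI : measure_display) (I : measurableType dI) (D : probability I R)
  (fi : I -> 'rV[R]_n -> R) (gfi : I -> 'rV[R]_n -> 'rV[R]_n) (L : R)
  (f : 'rV[R]_n -> R) (gF : 'rV[R]_n -> 'rV[R]_n) (g : 'rV[R]_n -> \bar R)
  (hs : R) (xbar : 'rV[R]_n) (sigma2 : R)
  (dO : measure_display) (Omega : measurableType dO) (P : probability Omega R)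
  (idx : nat -> Omega -> I) (x : nat -> Omega -> 'rV[R]_n) (x0 : 'rV[R]_n)
  (T : nat) (tau : R) :
  (* the f_i : convex, differentiable, L-Lipschitz gradient *)
  0 < L ->
  (forall i, convex_rfun (fi i)) ->
  (forall i, has_gradient (fi i) (gfi i)) ->
  (forall i u w, enorm (gfi i u - gfi i w) <= L * enorm (u - w)) ->
  (* f = E_{i~D} f_i  and  E_{i~D} grad f_i = grad f *)
  (forall u, D.-integrable setT (fun i => (fi i u)%:E) /\
             ((f u)%:E = \int[D]_i (fi i u)%:E)%E) ->
  has_gradient f gF ->
  (forall u (j : 'I_n), D.-integrable setT (fun i => (gfi i u ord0 j)%:E) /\
             ((gF u ord0 j)%:E = \int[D]_i (gfi i u ord0 j)%:E)%E) ->
  (* g proper, convex, lsc *)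
  proper_efun g -> convex_efun g -> lower_semicontinuous g ->
  let h := fun u => ((f u)%:E + g u)%E in
  (* h^* = min h, attained at xbar *)
  (forall u, (hs%:E <= h u)%E) -> h xbar = hs%:E ->
  (* sigma_*^2 = E_{i~D} ||grad f_i(xbar)||^2 < oo *)
  (\int[D]_i (sqnorm (gfi i xbar))%:E = sigma2%:E)%E ->
  (* i_t i.i.d. ~ D, i_t independent of x_0, ..., x_t *)
  (forall t, measurable_fun setT (idx t)) ->
  (forall t B, measurable B -> P (idx t @^-1` B) = D B) ->
  mutually_independent P idx ->
  (forall t A B, sigma_past x t A -> measurable B ->
     P (A `&` idx t @^-1` B) = (P A * P (idx t @^-1` B))%E) ->
  (* the iterates: x_0 deterministic, random vectors, proximal SGD *)
  (forall w, x 0%N w = x0) ->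
  (forall t (j : 'I_n), (t <= T.+1)%N ->
     measurable_fun setT (fun w => x t w ord0 j)) ->
  (1 <= T)%N -> 0 < tau -> tau * L < 1 / 2 ->
  (forall t w, (t <= T)%N ->
     is_prox tau g (x t w - tau *: gfi (idx t w) (x t w)) (x t.+1 w)) ->
  let eps := (1 - 2 * tau * L) / (1 + 2 * tau * L) in
  let a := 2 * tau * L * (1 + eps) in
  let v := (1 + 1 / eps) * sigma2 * tau in
  (* the one-step conditional inequality, for every sigma(x_0..x_t)-measurable z_t *)
  (forall t (z : Omega -> 'rV[R]_n) (A : set Omega), (t <= T)%N ->
     measurable_wrt (sigma_past x t) z -> sigma_past x t A ->
     (\int[P]_(w in A) (h (x t.+1 w) - h (z w) - a%:E * h (x t w) + (a * hs)%:E)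
      <= \int[P]_(w in A)
           ((1 / (2 * tau)) * (sqnorm (x t w - z w) - sqnorm (x t.+1 w - z w))
            + v)%:E)%E) ->
  forall xs : 'rV[R]_n, h xs = hs%:E ->
  (\int[P]_w (h (x T.+1 w) - hs%:E)
   <= (1 / (2 * tau * alpha a T T))%:E * \int[P]_w (sqnorm (x 0%N w - xs))%:E
      + (v / alpha a T T * alpha a T 0)%:E
      + (v / alpha a T T * \sum_(1 <= t < T.+1) alpha a T t)%:E
      + (1 / alpha a T T)%:E * \int[P]_w (h (x 0%N w) - hs%:E))%E.
Proof.
move=> HL0 Hcfi Hgfi Hlip Hfint Hgradf HgFint [gN [u0 gu0]] Hgconv Hglsc h hmin hxbar sig2
  Hmidx Hdidx Hindep Hindep2 x0det xmeas T1 tau0 tauL prox eps a v onestep xs hxs.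
have sig0 : 0 <= sigma2.
  have : (0 <= sigma2%:E)%E.
    by rewrite -sig2; apply: integral_ge0 => i _; rewrite lee_fin sqnorm_ge0.
  by rewrite lee_fin.
have q0 : 0 < 2 * tau * L by rewrite -mulrA; apply: mulr_gt0 => //; apply: mulr_gt0.
have q1 : 2 * tau * L < 1 by rewrite -mulrA; lra.
have eps0 : 0 < eps by rewrite /eps; apply: divr_gt0; lra.
have ha : a = 2 * (2 * tau * L) / (1 + 2 * tau * L).
  rewrite /a /eps; field; apply: lt0r_neq0; lra.
have a0 : 0 <= a by rewrite ha; apply: divr_ge0; lra.
have a1 : a <= 1 by rewrite ha ler_pdivrMr; lra.
have v0 : 0 <= v.
  rewrite /v; apply: mulr_ge0; last exact: ltW.
  apply: mulr_ge0 => //; apply: addr_ge0 => //; apply: divr_ge0 => //; exact: ltW.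
have e0 : 0 < 1 / (2 * tau) by apply: divr_gt0 => //; lra.
have [al0 alrec almono alpos] := alpha_facts T a0 a1.
have gfin : forall t w, (t <= T)%N -> g (x t.+1 w) \is a fin_num.
  by move=> t w tT; exact: prox_fin tau0 gN gu0 (prox t w tT).
have alT : 0 < alpha a T T := alpos T (leqnn T).
have cstI (c : \bar R) : (\int[P]_w (cst c) w = c)%E.
  rewrite integral_cst // -[RHS](mule1 c); congr (_ * _)%E.
  exact: probability_setT.
have sqI : (\int[P]_w (sqnorm (x 0%N w - xs))%:E = (sqnorm (x0 - xs))%:E)%E.
  rewrite -[RHS](cstI (sqnorm (x0 - xs))%:E); apply: eq_integral => w _.
  by rewrite x0det.
have [gx0|gx0] := boolP (g x0 \is a fin_num); last first.
  have gx0y : g x0 = +oo%E by move: gx0 (gN x0); case: (g x0).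
  have -> : (\int[P]_w (h (x 0%N w) - hs%:E) = +oo)%E.
    rewrite -[RHS](cstI +oo%E); apply: eq_integral => w _.
    by rewrite /h x0det gx0y /=.
  rewrite sqI gt0_muley ?lte_fin ?divr_gt0 // -!EFinM -!EFinD addey //.
  exact: leey.
pose Hr t w := f (x t w) + fine (g (x t w)).
have gfinall : forall t w, (t <= T.+1)%N -> g (x t w) \is a fin_num.
  by move=> [|t] w tT; [rewrite x0det | exact: gfin].
have hE : forall t w, (t <= T.+1)%N -> h (x t w) = (Hr t w)%:E.
  by move=> t w tT; rewrite /h /Hr EFinD fineK //; exact: gfinall.
pose Dr t w := Hr t w - hs.
have Dr0 : forall t w, (t <= T.+1)%N -> 0 <= Dr t w.
  by move=> t w tT; have := hmin (x t w); rewrite hE // lee_fin /Dr subr_ge0.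
have fcont : continuous f.
  by move=> u; apply: differentiable_continuous; exact: (Hgradf u).1.
have mHr : forall t, (t <= T.+1)%N -> measurable_fun setT (Hr t).
  move=> t tT; apply: measurable_funD.
    apply/measurable_EFinP.
    exact: (lsc_comp_measurable (X := x t) (fun j => xmeas t j tT) (cont_lsc fcont)).
  apply: measurableT_comp; first exact: fine_measurable.
  exact: (lsc_comp_measurable (X := x t) (fun j => xmeas t j tT) Hglsc).
have mDr : forall t, (t <= T.+1)%N -> measurable_fun setT (Dr t).
  by move=> t tT; apply: measurable_funB => //; exact: mHr.
pose Nz t (z : Omega -> 'rV[R]_n) w := sqnorm (x t w - z w).
have mN : forall t (z : Omega -> 'rV[R]_n), (t <= T.+1)%N ->
    (forall j, measurable_fun setT (fun w => z w ord0 j)) -> measurable_fun setT (Nz t z).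
  by move=> t z tT mz; apply: msq => // j; exact: xmeas.
have mcst : forall j, measurable_fun setT (fun _ : Omega => xs ord0 j).
  by move=> j; exact: measurable_cst.
have spT : forall t, sigma_past x t setT.
  by move=> t; rewrite -(setD0 setT); apply: sigma_algebraCD; exact: sigma_algebra0.
have mwc : forall t, measurable_wrt (sigma_past x t) (fun _ : Omega => xs).
  move=> t j B mB; case: (pselect (B (xs ord0 j))) => hB.
    have -> : (fun _ : Omega => xs ord0 j) @^-1` B = setT by apply/seteqP; split.
    exact: spT.
  have -> : (fun _ : Omega => xs ord0 j) @^-1` B = set0 by apply/seteqP; split.
  exact: sigma_algebra0.
have mwx : forall t s, (s <= t)%N -> measurable_wrt (sigma_past x t) (x s).
  move=> t s st j B mB; apply: sub_sigma_algebra.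
  exists s => //; exists j => //; exists B => //; by rewrite setTI.
have Nz0 : forall t z w, 0 <= Nz t z w by move=> *; exact: sqnorm_ge0.
have key : forall t (z : Omega -> 'rV[R]_n) (Hz : Omega -> R), (t <= T)%N ->
    measurable_wrt (sigma_past x t) z ->
    (forall j, measurable_fun setT (fun w => z w ord0 j)) ->
    (forall w, h (z w) = (Hz w + hs)%:E) -> measurable_fun setT Hz ->
    (forall w, 0 <= Hz w) -> P.-integrable setT (EFin \o Hz) ->
    P.-integrable setT (EFin \o Nz t z) ->
    P.-integrable setT (EFin \o Dr t) ->
    [/\ P.-integrable setT (EFin \o Dr t.+1), P.-integrable setT (EFin \o Nz t.+1 z) &
     Rintegral P setT (Dr t.+1) - (Rintegral P setT Hz + a * Rintegral P setT (Dr t))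
       <= 1 / (2 * tau) * (Rintegral P setT (Nz t z) - Rintegral P setT (Nz t.+1 z)) + v].
  move=> t z Hz tT mwz mz hz mHz Hz0 iHz iN iD.
  have tT1 : (t <= T.+1)%N by exact: leqW.
  have := onestep t z setT tT mwz (spT t).
  have -> : (\int[P]_(w in setT) (h (x t.+1 w) - h (z w) - a%:E * h (x t w) + (a * hs)%:E)
     = \int[P]_w ((Dr t.+1 w - (Hz w + a * Dr t w))%:E))%E.
    apply: eq_integral => w _; rewrite hz !hE //.
    rewrite -EFinM -!EFinB -EFinD /Dr; congr (_%:E); ring.
  move=> ineq.
  exact: (L2 a0 e0 v0 (mDr t.+1 tT) mHz (mDr t tT1) (mN t z tT1 mz) (mN t.+1 z tT mz)
    (fun w => Dr0 t.+1 w tT) Hz0 (fun w => Dr0 t w tT1) (Nz0 t z) (Nz0 t.+1 z) iHz iD iN ineq).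
have hz0 : forall w, h ((fun _ : Omega => xs) w) = ((fun _ : Omega => 0) w + hs)%:E.
  by move=> w; rewrite hxs add0r.
have intg : forall t, (t <= T.+1)%N ->
    P.-integrable setT (EFin \o Dr t) /\ P.-integrable setT (EFin \o Nz t (fun _ => xs)).
  elim => [|t IH] tT.
    split.
      apply: (eq_integrable measurableT (EFin \o (fun _ => f x0 + fine (g x0) - hs)));
        last exact: intC_R.
      by move=> w _ /=; rewrite /Dr /Hr x0det.
    apply: (eq_integrable measurableT (EFin \o (fun _ => sqnorm (x0 - xs))));
      last exact: intC_R.
    by move=> w _ /=; rewrite /Nz x0det.
  have [iD iN] := IH (ltnW tT).
  have [i1 i2 _] := key t (fun _ => xs) (fun _ => 0) tT (mwc t) mcst hz0
    (measurable_cst _) (fun _ => lexx 0) (intC_R P 0) iN iD.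
  by split.
have intD : forall t, (t <= T.+1)%N -> P.-integrable setT (EFin \o Dr t).
  by move=> t tT; exact: (intg t tT).1.
have intNx : forall t s, (t <= T.+1)%N -> (s <= T.+1)%N ->
    P.-integrable setT (EFin \o Nz t (x s)).
  move=> t s tT sT.
  apply: (@le_integrable _ _ _ _ _ measurableT _ (EFin \o (fun w =>
     2 * Nz t (fun _ => xs) w + 2 * Nz s (fun _ => xs) w))).
  - by apply/measurable_EFinP; apply: mN => // j; exact: xmeas.
  - move=> w _ /=; rewrite lee_fin !ger0_norm ?sqnorm_tri //.
    by apply: addr_ge0; apply: mulr_ge0 => //.
  - by apply: intD_R; apply: intZ_R; [exact: (intg t tT).2|exact: (intg s sT).2].
pose dd u := if (u <= T.+1)%N then Rintegral P setT (Dr u) else 0.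
have ddE : forall u, (u <= T.+1)%N -> dd u = Rintegral P setT (Dr u).
  by move=> u uT; rewrite /dd uT.
pose zz (s : nat) : Omega -> 'rV[R]_n := if s == 0%N then (fun _ => xs) else x s.
pose mm u s := Rintegral P setT (Nz u (zz s)).
have dd0 : forall u, 0 <= dd u.
  move=> u; rewrite /dd; case: ifP => // uT; apply: Rintegral_ge0 => w _; exact: Dr0.
have mm0 : forall u s, 0 <= mm u s.
  by move=> u s; apply: Rintegral_ge0 => w _; exact: Nz0.
have mmd : forall u, (1 <= u)%N -> mm u u = 0.
  move=> [|u] // _; rewrite /mm /zz /=.
  rewrite (@eq_Rintegral _ _ _ P setT (fun _ => 0)); first exact: RIC.
  by move=> w _; rewrite /Nz subrr sqnorm_zero.
have ineq0 : forall t, (t <= T)%N ->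
    dd t.+1 - a * dd t <= 1 / (2 * tau) * (mm t 0%N - mm t.+1 0%N) + v.
  move=> t tT.
  have [_ _] := key t (fun _ => xs) (fun _ => 0) tT (mwc t) mcst hz0
    (measurable_cst _) (fun _ => lexx 0) (intC_R P 0) ((intg t (leqW tT)).2)
    (intD t (leqW tT)).
  by rewrite !ddE ?(leqW tT) // /mm /zz /= RIC add0r.
have ineqs : forall t s, (1 <= s <= t)%N -> (t <= T)%N ->
    dd t.+1 - (dd s + a * dd t) <= 1 / (2 * tau) * (mm t s - mm t.+1 s) + v.
  move=> t s /andP [s1 st] tT.
  have tT1 : (t <= T.+1)%N := leqW tT.
  have sT : (s <= T.+1)%N by apply: leq_trans st tT1.
  have hzs : forall w, h (x s w) = (Dr s w + hs)%:E.
    by move=> w; rewrite hE // /Dr subrK.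
  have [_ _] := key t (x s) (Dr s) tT (mwx t s st) (fun j => xmeas s j sT) hzs
    (mDr s sT) (fun w => Dr0 s w sT) (intD s sT) (intNx t s tT1 sT) (intD t tT1).
  have zs : zz s = x s by rewrite /zz; case: s s1 {st sT hzs}.
  by rewrite !ddE // /mm zs.
have pot := potential a0 a1 e0 v0 al0 alrec almono dd0 mm0 mmd ineq0 ineqs.
have ddT : (\int[P]_w (h (x T.+1 w) - hs%:E) = (dd T.+1)%:E)%E.
  rewrite ddE // /Rintegral fineK; last exact: integrable_fin_num (intD _ (leqnn _)).
  by apply: eq_integral => w _; rewrite hE // /Dr EFinB.
have dd0E : (\int[P]_w (h (x 0%N w) - hs%:E) = (dd 0%N)%:E)%E.
  rewrite ddE // /Rintegral fineK; last exact: integrable_fin_num (intD _ (leq0n _)).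
  by apply: eq_integral => w _; rewrite hE // /Dr EFinB.
have mm00 : mm 0%N 0%N = sqnorm (x0 - xs).
  rewrite /mm /zz /= (@eq_Rintegral _ _ _ P setT (fun _ => sqnorm (x0 - xs))).
    exact: RIC.
  by move=> w _; rewrite /Nz x0det.
rewrite ddT dd0E sqI -!EFinM -!EFinD lee_fin.
rewrite mm00 (big_ltn (ltn0Sn T)) /= in pot.
set al := alpha a T T in pot alT *.
set S := \sum_(1 <= t < T.+1) alpha a T t in pot *.
have ia : al * (1 / al) = 1 by rewrite mul1r mulfV // lt0r_neq0.
have iap : 0 < 1 / al by rewrite divr_gt0.
have E1 : 1 / (2 * tau * al) = 1 / (2 * tau) * (1 / al).
  by field; apply/andP; split; apply: lt0r_neq0 => //; lra.
have E2 : v / al = v * (1 / al) by rewrite mul1r.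
rewrite E1 E2.
have := ler_wpM2l (ltW iap) pot.
set ial := 1 / al.
have ia2 : ial * (al * dd T.+1) = dd T.+1 by rewrite mulrA (mulrC ial) ia mul1r.
move=> h2; rewrite al0; lra.
Qed.
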